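(* Let $\Omega_2=\{\omega_1,\omega_2\}$ with $\omega_1\neq\omega_2$, and $\mathcal{A}_2=2^{\Omega_2}$. Let $1$ denote the coevent $\omega_1^*\oplus\omega_2^*\oplus\omega_1^*\omega_2^*$ (equivalently, $1(A)=1$ iff $A\neq\emptyset$). A $q$-measure $\mu$ on $\mathcal{A}_2$ actualizes $1$ if and only if $\mu(\{\omega_1\})\neq 0$, $\mu(\{\omega_2\})\neq 0$ and $\mu(\Omega_2)=\max(\mu(\{\omega_1\}),\mu(\{\omega_2\}))$.
   Context: Let $\Omega$ be a finite nonempty set and $\mathcal{A}=2^\Omega$. A coevent is a map $\phi:\mathcal{A}\to\{0,1\}$ with $\phi(\emptyset)=0$. For $\omega\in\Omega$ the evaluation map $\omega^*$ is the coevent with $\omega^*(A)=1$ if $\omega\in A$ and $0$ otherwise. Coevents are combined pointwise: $(\phi\oplus\psi)(A)=\phi(A)+\psi(A) \bmod 2$ and $(\phi\psi)(A)=\phi(A)\psi(A)$. For $f:\Omega\to[0,\infty)$ and a coevent $\phi$, the $q$-integral is $\int f\,d\phi=\int_0^\infty \phi(\{\omega\in\Omega: f(\omega)>\lambda\})\,d\lambda$ (Lebesgue measure in $\lambda$), and for $A\in\mathcal{A}$, $\int_A f\,d\phi=\int f\chi_A\,d\phi$. A $q$-measure is a map $\mu:\mathcal{A}\to[0,\infty)$ such that for all pairwise disjoint $A,B,C\in\mathcal{A}$: $\mu(A\cup B\cup C)=\mu(A\cup B)+\mu(A\cup C)+\mu(B\cup C)-\mu(A)-\mu(B)-\mu(C)$.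 The $q$-measure $\mu$ actualizes $\phi$ if there is a symmetric function $f:\Omega\times\Omega\to(0,\infty)$ such that for all $A\in\mathcal{A}$, $\mu(A)=\int g_A\,d\phi$, where $g_A(\omega')=\int_A f(\cdot,\omega')\,d\phi$ (the $q$-integral over $A$ of $\omega\mapsto f(\omega,\omega')$). *)

(* Defs.v *)
From Stdlib Require Import Reals Bool.
Open Scope R_scope.

Definition event (T : Type) := T -> bool.
Definition coevent (T : Type) := event T -> bool.

Definition ev_empty {T : Type} : event T := fun _ => false.
Definition ev_full {T : Type} : event T := fun _ => true.
Definition ev_union {T : Type} (A B : event T) : event T := fun w => A w || B w.
Definition ev_disjoint {T : Type} (A B : event T) : Prop :=
  forall w, A w && B w = false.
Definition ev_singleton {T : Type} (eqd : forall x y : T, {x = y} + {x <> y})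
  (a : T) : event T := fun w => if eqd w a then true else false.

Definition evalmap {T : Type} (w : T) : coevent T := fun A => A w.
Definition cxor {T : Type} (phi psi : coevent T) : coevent T :=
  fun A => xorb (phi A) (psi A).
Definition cmul {T : Type} (phi psi : coevent T) : coevent T :=
  fun A => phi A && psi A.

Definition one_coevent {T : Type} (w1 w2 : T) : coevent T :=
  cxor (cxor (evalmap w1) (evalmap w2)) (cmul (evalmap w1) (evalmap w2)).

Definition b2R (b : bool) : R := if b then 1 else 0.

Definition chi {T : Type} (A : event T) (w : T) : R := b2R (A w).

Definition level {T : Type} (h : T -> R) (l : R) : event T :=
  fun w => if Rlt_dec l (h w) then true else false.

(* is_qint h phi I : the q-integral  int_0^oo phi({h > l}) dl  equals I.
   For h bounded by M >= 0 the integrand vanishes on [M, oo) (as phi(empty)=0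
   for coevents), so the integral over [0,oo) is the (Riemann) integral of the
   step function over [0, M]. *)
Definition is_qint {T : Type} (h : T -> R) (phi : coevent T) (I : R) : Prop :=
  exists M : R, 0 <= M /\ (forall w, h w <= M) /\
    exists pr : Riemann_integrable (fun l => b2R (phi (level h l))) 0 M,
      RiemannInt pr = I.

Definition is_qmeasure {T : Type} (mu : event T -> R) : Prop :=
  (forall A, 0 <= mu A) /\
  (forall A B C, ev_disjoint A B -> ev_disjoint A C -> ev_disjoint B C ->
     mu (ev_union (ev_union A B) C) =
       mu (ev_union A B) + mu (ev_union A C) + mu (ev_union B C)
       - mu A - mu B - mu C).

Definition actualizes {T : Type} (mu : event T -> R) (phi : coevent T) : Prop :=
  exists f : T -> T -> R,
    (forall x y, f x y = f y x) /\ (forall x y, 0 < f x y) /\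
    exists g : event T -> T -> R,
      (forall A w', is_qint (fun w => f w w' * chi A w) phi (g A w')) /\
      (forall A, is_qint (g A) phi (mu A)).

(* Main.v *)
Require Import Defs.
From Stdlib Require Import Reals Lra Lia FunctionalExtensionality.
Open Scope R_scope.

Definition F (m : R) : R -> R := fun l => if Rlt_dec l m then 1 else 0.

Lemma step_int (m M : R) : 0 <= M -> m <= M ->
  { pr : Riemann_integrable (F m) 0 M | RiemannInt pr = Rmax 0 m }.
Proof.
  intros HM HmM.
  set (c := Rmax 0 m).
  assert (Hc0 : 0 <= c) by apply Rmax_l.
  assert (HcM : c <= M) by (apply Rmax_lub; lra).
  assert (Aphi : adapted_couple (F m) 0 M (cons 0 (cons c (cons M nil))) (cons 1 (cons 0 nil))).
  { unfold adapted_couple. repeat split.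
    - intros i Hi. simpl in Hi. destruct i as [|[|i]]; simpl; [lra|lra|lia].
    - simpl. rewrite Rmin_left; lra.
    - simpl. rewrite Rmax_right; lra.
    - intros i Hi. simpl in Hi. destruct i as [|[|i]]; simpl.
      + intros x [Hx1 Hx2]. unfold F. destruct (Rlt_dec x m); auto.
        exfalso. unfold c, Rmax in Hx2. destruct (Rle_dec 0 m); lra.
      + intros x [Hx1 Hx2]. unfold F. destruct (Rlt_dec x m); auto.
        exfalso. unfold c, Rmax in Hx1. destruct (Rle_dec 0 m); lra.
      + exfalso; lia. }
  assert (Apsi : adapted_couple (fct_cte 0) 0 M (cons 0 (cons M nil)) (cons 0 nil)).
  { unfold adapted_couple. repeat split.
    - intros i Hi. simpl in Hi. destruct i as [|i]; simpl; [lra|lia].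
    - simpl. rewrite Rmin_left; lra.
    - simpl. rewrite Rmax_right; lra.
    - intros i Hi. simpl in Hi. destruct i as [|i]; simpl.
      + intros x _. reflexivity.
      + exfalso; lia. }
  pose (phi := mkStepFun (existT _ _ (existT _ _ Aphi) : IsStepFun (F m) 0 M)).
  pose (psi := mkStepFun (existT _ _ (existT _ _ Apsi) : IsStepFun (fct_cte 0) 0 M)).
  assert (Epsi : RiemannInt_SF psi = 0).
  { unfold RiemannInt_SF. destruct (Rle_dec 0 M); unfold psi, subdivision, subdivision_val; simpl; ring. }
  assert (Ephi : RiemannInt_SF phi = c).
  { unfold RiemannInt_SF. destruct (Rle_dec 0 M); simpl; [ring| lra]. }
  assert (H1 : forall t, Rmin 0 M <= t <= Rmax 0 M -> Rabs (F m t - phi t) <= psi t).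
  { intros t _. simpl. unfold fct_cte. rewrite Rminus_diag, Rabs_R0. lra. }
  assert (H2 : forall eps : posreal, Rabs (RiemannInt_SF psi) < eps).
  { intros eps. rewrite Epsi, Rabs_R0. apply cond_pos. }
  exists (fun eps : posreal => existT _ phi (exist _ psi (conj H1 (H2 eps)))).
  unfold RiemannInt. destruct (RiemannInt_exists _ RinvN RinvN_cv) as [l Hl].
  unfold phi_sequence in Hl. simpl in Hl. fold phi in Hl. rewrite Ephi in Hl.
  apply UL_sequence with (fun _ : nat => c); auto.
  intros e He. exists 0%nat. intros. unfold R_dist. rewrite Rminus_diag, Rabs_R0. exact He.
Qed.


Lemma integrand_eq {T : Type} (w1 w2 : T) (hcov : forall w, w = w1 \/ w = w2)
  (h : T -> R) : forall l,
  b2R (one_coevent w1 w2 (level h l)) = F (Rmax (h w1) (h w2)) l.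
Proof.
  intros l. unfold one_coevent, cxor, cmul, evalmap, level, F, b2R.
  destruct (Rlt_dec l (h w1)), (Rlt_dec l (h w2)), (Rlt_dec l (Rmax (h w1) (h w2)));
    simpl; auto; exfalso; unfold Rmax in *; destruct (Rle_dec (h w1) (h w2)); lra.
Qed.

Lemma qint_iff {T : Type} (w1 w2 : T) (hcov : forall w, w = w1 \/ w = w2)
  (h : T -> R) (I : R) :
  is_qint h (one_coevent w1 w2) I <-> I = Rmax 0 (Rmax (h w1) (h w2)).
Proof.
  set (m := Rmax (h w1) (h w2)).
  split.
  - intros [M [HM [hb [pr Hpr]]]].
    assert (HmM : m <= M) by (apply Rmax_lub; auto).
    destruct (step_int m M HM HmM) as [pr' Hpr'].
    rewrite <- Hpr, <- Hpr'. apply RiemannInt_P18; auto.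
    intros x _. apply integrand_eq; auto.
  - intros ->. exists (Rmax 0 m). split; [apply Rmax_l|]. split.
    + intros w. eapply Rle_trans; [|apply Rmax_r].
      destruct (hcov w); subst w; unfold m; [apply Rmax_l|apply Rmax_r].
    + destruct (step_int m (Rmax 0 m) (Rmax_l _ _) (Rmax_r _ _)) as [pr' Hpr'].
      assert (pr : Riemann_integrable (fun l => b2R (one_coevent w1 w2 (level h l))) 0 (Rmax 0 m)).
      { apply Riemann_integrable_ext with (F m); auto.
        intros x _. symmetry. apply integrand_eq; auto. }
      exists pr. rewrite <- Hpr'. apply RiemannInt_P18; [apply Rmax_l|].
      intros x _. apply integrand_eq; auto.
Qed.

Ltac rmx := repeat (unfold Rmax, Rmin in *; match goal with
  | |- context [Rle_dec ?a ?b] => destruct (Rle_dec a b)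
  | H : context [Rle_dec ?a ?b] |- _ => destruct (Rle_dec a b) end); try lra.

Theorem theorem4p3 (T : Type) (eqd : forall x y : T, {x = y} + {x <> y})
  (w1 w2 : T) (hne : w1 <> w2) (hcov : forall w, w = w1 \/ w = w2)
  (mu : event T -> R) (hmu : is_qmeasure mu) :
  actualizes mu (one_coevent w1 w2) <->
  (mu (ev_singleton eqd w1) <> 0 /\ mu (ev_singleton eqd w2) <> 0 /\
   mu ev_full = Rmax (mu (ev_singleton eqd w1)) (mu (ev_singleton eqd w2))).
Proof.
  destruct hmu as [hpos hadd].
  assert (hempty : mu ev_empty = 0).
  { assert (Hd : ev_disjoint (@ev_empty T) ev_empty) by (intro; reflexivity).
    pose proof (hadd _ _ _ Hd Hd Hd) as E. change (mu ev_empty = mu ev_empty + mu ev_empty + mu ev_empty - mu ev_empty - mu ev_empty - mu ev_empty) in E.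
    lra. }
  assert (hne' : w2 <> w1) by auto.
  set (s1 := ev_singleton eqd w1). set (s2 := ev_singleton eqd w2).
  assert (c11 : s1 w1 = true) by (unfold s1, ev_singleton; destruct (eqd w1 w1); congruence).
  assert (c12 : s1 w2 = false) by (unfold s1, ev_singleton; destruct (eqd w2 w1); congruence).
  assert (c21 : s2 w1 = false) by (unfold s2, ev_singleton; destruct (eqd w1 w2); congruence).
  assert (c22 : s2 w2 = true) by (unfold s2, ev_singleton; destruct (eqd w2 w2); congruence).
  split.
  - intros [f [fsym [fpos [g [Hg Hmu]]]]].
    assert (G : forall A w', g A w' = Rmax 0 (Rmax (f w1 w' * chi A w1) (f w2 w' * chi A w2))).
    { intros A w'. apply (proj1 (qint_iff w1 w2 hcov (fun w => f w w' * chi A w) _)). apply Hg. }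
    assert (Mu : forall A, mu A = Rmax 0 (Rmax (g A w1) (g A w2))).
    { intros A. apply (proj1 (qint_iff w1 w2 hcov _ _)). apply Hmu. }
    pose proof (fpos w1 w1). pose proof (fpos w1 w2). pose proof (fpos w2 w2).
    idtac.
    assert (R0 : forall x, 0 < x -> Rmax 0 x = x) by (intros; apply Rmax_right; lra).
    assert (R0' : forall x, 0 < x -> Rmax x 0 = x) by (intros; apply Rmax_left; lra).
    assert (gs1 : forall w', g s1 w' = f w1 w').
    { intros w'. rewrite G. unfold chi, b2R. rewrite c11, c12, Rmult_1_r, Rmult_0_r, R0'; auto. }
    assert (gs2 : forall w', g s2 w' = f w2 w').
    { intros w'. rewrite G. unfold chi, b2R. rewrite c21, c22, Rmult_1_r, Rmult_0_r, !(R0 (f w2 w')); auto. }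
    assert (gf : forall w', g ev_full w' = Rmax (f w1 w') (f w2 w')).
    { intros w'. rewrite G. unfold chi, b2R, ev_full. rewrite !Rmult_1_r, R0; auto.
      eapply Rlt_le_trans; [apply (fpos w1 w')|apply Rmax_l]. }
    rewrite !Mu, !gs1, !gs2, !gf. rewrite (fsym w2 w1).
    repeat split; rmx.
  - intros [Ha [Hb Hf]].
    set (a := mu s1) in *. set (b := mu s2) in *.
    assert (Ha' : 0 < a) by (pose proof (hpos s1); fold a in H; lra).
    assert (Hb' : 0 < b) by (pose proof (hpos s2); fold b in H; lra).
    set (f := fun x y => if eqd x w1 then (if eqd y w1 then a else Rmin a b)
                         else (if eqd y w1 then Rmin a b else b)).
    exists f. split; [|split].
    + intros x y. unfold f. destruct (eqd x w1), (eqd y w1); auto.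
    + intros x y. unfold f. destruct (eqd x w1), (eqd y w1); auto; rmx.
    + exists (fun A w' => Rmax 0 (Rmax (f w1 w' * chi A w1) (f w2 w' * chi A w2))).
      split.
      * intros A w'. apply (proj2 (qint_iff w1 w2 hcov (fun w => f w w' * chi A w) _)). reflexivity.
      * intros A. apply (proj2 (qint_iff w1 w2 hcov _ _)).
        assert (f11 : f w1 w1 = a) by (unfold f; destruct (eqd w1 w1); congruence).
        assert (f12 : f w1 w2 = Rmin a b) by (unfold f; destruct (eqd w1 w1), (eqd w2 w1); congruence).
        assert (f21 : f w2 w1 = Rmin a b) by (unfold f; destruct (eqd w2 w1), (eqd w1 w1); congruence).
        assert (f22 : f w2 w2 = b) by (unfold f; destruct (eqd w2 w1); congruence).
        rewrite f11, f12, f21, f22. unfold chi.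
        assert (EA : A = if A w1 then (if A w2 then ev_full else s1)
                         else (if A w2 then s2 else ev_empty)).
        { apply functional_extensionality. intros w.
          destruct (hcov w); subst w;
          destruct (A w1) eqn:E1, (A w2) eqn:E2; auto. }
        assert (Hm : 0 < Rmin a b) by rmx.
        destruct (A w1), (A w2); rewrite EA; unfold b2R; fold a b;
          rewrite ?Rmult_1_r, ?Rmult_0_r.
        -- rewrite Hf. rmx.
        -- rmx.
        -- rmx.
        -- rewrite hempty. rmx.
Qed.
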